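(* Let $\ddot q\in L^{1,2}_a(\Omega_\delta\times\Omega_\delta)$ with $\ddot q\not\equiv0$. Then the problem $\min_{\kappa_0\in\mathbb{A}^0_\delta}\hat I(\ddot\kappa_0;\ddot q)$, where $\ddot\kappa_0$ is defined by $2\ddot\kappa_0^{-1}(x,x')=\kappa_0^{-1}(x)+\kappa_0^{-1}(x')$, admits an optimal solution given pointwise by $\hat\kappa_0(x)=\hat c_\delta\big[\int_{\Omega_\delta}|\ddot q(x,x')|^2dx'\big]^{1/2}$, where $\hat c_\delta=|\Omega_\delta|\,\|\ddot q\|^{-1}_{L^{1,2}(\Omega_\delta\times\Omega_\delta)}$.
   Context: $\Omega_\delta\subset\mathbb{R}^n$ is a bounded open set. $L^{1,2}(\Omega_\delta\times\Omega_\delta)$ is the mixed-norm space with norm $\|\ddot q\|_{L^{1,2}}=\int_{\Omega_\delta}(\int_{\Omega_\delta}|\ddot q(x,x')|^2dx')^{1/2}dx$; $L^{1,2}_a$ is its subspace of antisymmetric functions ($\ddot q(x,x')=-\ddot q(x',x)$ a.e.). $\mathbb{A}^0_\delta=\{\kappa_0\in L^1(\Omega_\delta):\kappa_0\ge0\text{ a.e.},\ \int_{\Omega_\delta}\kappa_0\le|\Omega_\delta|\}$. $\hat I(\ddot\kappa;\ddot q)=\frac12\int_{\Omega_\delta}\int_{\Omega_\delta}\ddot\kappa^{-1}(x,x')\ddot q(x,x')^2\,dx\,dx'$, with $\kappa_0^{-1}=+\infty$ where $\kappa_0=0$ and the convention $(+\infty)\cdot0=0$. *)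

(* Defs.v *)
From HB Require Import structures.
From mathcomp Require Import all_boot all_order all_algebra.
From mathcomp Require Import all_classical all_reals all_analysis.
Set Implicit Arguments. Unset Strict Implicit. Unset Printing Implicit Defensive.
Import Order.TTheory GRing.Theory Num.Theory.
Local Open Scope classical_set_scope.
Local Open Scope ring_scope.

Section defs.
Context {d : measure_display} {T : measurableType d} {R : realType}.
Variable mu : {measure set T -> \bar R}.
Variable Om : set T.

Definition esqrt (x : \bar R) : \bar R :=
  match x with
  | r%:E => (Num.sqrt r)%:E
  | +oo%E => +oo%E
  | -oo%E => 0%E
  end.

Definition inner_sq (q : T -> T -> R) (x : T) : \bar R :=
  (\int[mu]_(x' in Om) (`|q x x'| ^+ 2)%:E)%E.

Definition L12norm (q : T -> T -> R) : \bar R :=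
  (\int[mu]_(x in Om) esqrt (inner_sq q x))%E.

Definition ae2 (P : T -> T -> Prop) : Prop :=
  exists N : set (T * T), measurable N /\ ((mu \x mu) N = 0)%E /\
    [set z | Om z.1 /\ Om z.2 /\ ~ P z.1 z.2] `<=` N.

Definition in_L12 (q : T -> T -> R) : Prop :=
  measurable_fun (Om `*` Om) (fun z => q z.1 z.2) /\ (L12norm q < +oo)%E.

Definition in_L12a (q : T -> T -> R) : Prop :=
  in_L12 q /\ ae2 (fun x x' => q x x' = - q x' x).

Definition ae_zero2 (q : T -> T -> R) : Prop := ae2 (fun x x' => q x x' = 0).

Definition admissible0 (k : T -> R) : Prop :=
  mu.-integrable Om (fun x => (k x)%:E) /\
  {ae mu, forall x, Om x -> 0 <= k x} /\
  (\int[mu]_(x in Om) (k x)%:E <= mu Om)%E.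

Definition einv (r : R) : \bar R := if r == 0 then +oo%E else (r^-1)%:E.

Definition kdd_inv (k : T -> R) (x x' : T) : \bar R :=
  ((2^-1)%:E * (einv (k x) + einv (k x')))%E.

(* hat I(ddot kappa; q) = 1/2 int int ddot kappa^{-1} q^2  (with +oo * 0 = 0) *)
Definition Ihat (k : T -> R) (q : T -> T -> R) : \bar R :=
  ((2^-1)%:E * \int[mu]_(x in Om) \int[mu]_(x' in Om)
     (kdd_inv k x x' * (q x x' ^+ 2)%:E))%E.

Definition c_hat (q : T -> T -> R) : R := fine (mu Om) / fine (L12norm q).

Definition kappa_hat (q : T -> T -> R) (x : T) : R :=
  c_hat q * fine (esqrt (inner_sq q x)).

End defs.

(* Main.v *)
Require Import Defs.
From HB Require Import structures.
From mathcomp Require Import all_boot all_order all_algebra.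
From mathcomp Require Import all_classical all_reals all_analysis.
From mathcomp Require Import measurable_realfun.
From mathcomp Require Import ring lra.
Import Order.TTheory GRing.Theory Num.Theory.
Local Open Scope classical_set_scope.
Local Open Scope ring_scope.
Section core.
Context (d : measure_display) (T : measurableType d) (R : realType)
  (mu : {measure set T -> \bar R}) (Om : set T)
  (hsf : sigma_finite setT mu) (mOm : measurable Om).
Definition muf : set T -> \bar R := mu.
HB.instance Definition _ := Measure.on muf.
HB.instance Definition _ := @Measure_isSigmaFinite.Build _ _ _ muf hsf.
Local Open Scope ereal_scope.

Let mOO : measurable (Om `*` Om). Proof. exact: measurableX. Qed.

Lemma sec_meas (h : T -> T -> \bar R) x :
  measurable_fun (Om `*` Om) (fun z => h z.1 z.2) -> Om x ->
  measurable_fun Om (h x).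
Proof.
move=> mh Omx.
have -> : h x = (fun z => h z.1 z.2) \o pair x by [].
apply: (measurable_comp mOO) => //; last exact: measurable_funTS.
by move=> _ [y Omy <-].
Qed.

Section tonelli.
Variable h : T -> T -> \bar R.
Hypothesis mh : measurable_fun (Om `*` Om) (fun z => h z.1 z.2).
Hypothesis h0 : forall x y, Om x -> Om y -> 0 <= h x y.

Let g := (fun z => h z.1 z.2) \_ (Om `*` Om).
Let mg : measurable_fun setT g.
Proof. by apply/(measurable_restrictT _ mOO). Qed.
Let g0 z : 0 <= g z.
Proof. rewrite /g patchE; case: ifPn => [/set_mem [? ?]|_]; [exact: h0|done]. Qed.

Let memXl x y : x \in Om -> ((x, y) \in Om `*` Om) = (y \in Om).
Proof.
move=> /set_mem Omx; apply/idP/idP => [/set_mem [] _ /mem_set //|/set_mem Omy].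
by apply/mem_set; split.
Qed.

Let memXr x y : y \in Om -> ((x, y) \in Om `*` Om) = (x \in Om).
Proof.
move=> /set_mem Omy; apply/idP/idP => [/set_mem [] /mem_set //|/set_mem Omx].
by apply/mem_set; split.
Qed.

Let notmemXl x y : x \notin Om -> ((x, y) \in Om `*` Om) = false.
Proof.
move=> Omx; apply/negbTE/negP => /set_mem [/= Om1 _].
by move: Omx; rewrite notin_setE.
Qed.

Let notmemXr x y : y \notin Om -> ((x, y) \in Om `*` Om) = false.
Proof.
move=> Omy; apply/negbTE/negP => /set_mem [/= _ Om2].
by move: Omy; rewrite notin_setE.
Qed.

Let FE x : fubini_F muf g x = (fun x => \int[muf]_(y in Om) h x y) \_ Om x.
Proof.
rewrite /fubini_F patchE; case: ifPn => Omx.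
  rewrite [RHS]integral_mkcond; apply: eq_integral => y _.
  by rewrite /g !patchE memXl.
change point with (0 : \bar R).
by apply: integral0_eq => y _; rewrite /g patchE notmemXl.
Qed.

Let GE y : fubini_G muf g y = (fun y => \int[muf]_(x in Om) h x y) \_ Om y.
Proof.
rewrite /fubini_G patchE; case: ifPn => Omy.
  rewrite [RHS]integral_mkcond; apply: eq_integral => x _.
  by rewrite /g !patchE memXr.
change point with (0 : \bar R).
by apply: integral0_eq => x _; rewrite /g patchE notmemXr.
Qed.

Lemma tonelli_meas : measurable_fun Om (fun x => \int[muf]_(y in Om) h x y).
Proof.
have := measurable_fun_fubini_tonelli_F (m2:=muf) g mg g0.
move=> /(measurable_funS measurableT (subsetT Om)).
apply: eq_measurable_fun => x /set_mem Omx.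
by rewrite FE patchE ifT //; exact/mem_set.
Qed.

Lemma tonelli_1 : \int[muf]_(x in Om) \int[muf]_(y in Om) h x y =
  \int[muf \x muf]_(z in Om `*` Om) h z.1 z.2.
Proof.
rewrite [RHS]integral_mkcond (fubini_tonelli1 (m1:=muf) (m2:=muf) g mg g0).
rewrite [LHS]integral_mkcond; apply: eq_integral => x _; by rewrite FE.
Qed.

Lemma tonelli_2 : \int[muf]_(y in Om) \int[muf]_(x in Om) h x y =
  \int[muf \x muf]_(z in Om `*` Om) h z.1 z.2.
Proof.
rewrite [RHS]integral_mkcond (fubini_tonelli2 (m1:=muf) (m2:=muf) g mg g0).
rewrite [LHS]integral_mkcond; apply: eq_integral => x _; by rewrite GE.
Qed.

End tonelli.

Lemma gen_meas (h : T -> T -> \bar R) :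
  measurable_fun (Om `*` Om) (fun z => h z.1 z.2) ->
  measurable_fun Om (fun x => \int[muf]_(y in Om) h x y).
Proof.
move=> mh.
have -> : (fun x => \int[muf]_(y in Om) h x y) =
  (fun x => \int[muf]_(y in Om) (fun x y => (h x)^\+ y) x y) \-
  (fun x => \int[muf]_(y in Om) (fun x y => (h x)^\- y) x y).
  by apply/funext => x; rewrite integralE.
apply: emeasurable_funB; apply: tonelli_meas.
- have -> : (fun z : T * T => (h z.1)^\+ z.2) = (fun z => h z.1 z.2)^\+.
    by apply/funext => z; rewrite !funeposE.
  exact: measurable_funepos.
- by move=> *; exact: funepos_ge0.
- have -> : (fun z : T * T => (h z.1)^\- z.2) = (fun z => h z.1 z.2)^\-.
    by apply/funext => z; rewrite !funenegE.
  exact: measurable_funeneg.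
- by move=> *; exact: funeneg_ge0.
Qed.


Lemma measurable_inv : measurable_fun [set: R] (GRing.inv : R -> R).
Proof.
have -> : [set: R] = [set 0%R] `|` [set x | x != 0%R].
  apply/seteqP; split => [x _|//].
  by case: (eqVneq x 0%R) => [->|?]; [left|right].
have m0 : measurable [set 0%R : R] by [].
have mn0 : measurable [set x : R | x != 0%R] by apply: open_measurable; exact: open_neq.
apply: (proj2 (measurable_funU (GRing.inv : R -> R) m0 mn0)); split; first exact: measurable_fun_set1.
apply: open_continuous_measurable_fun; first exact: open_neq.
by move=> x /set_mem; exact: inv_continuous.
Qed.

Lemma measurable_einv : measurable_fun [set: R] (@einv R).
Proof.
rewrite /einv; apply: measurable_fun_ifT.
- by apply: measurable_fun_eqr => //; exact: measurable_cst.
- exact: measurable_cst.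
- by apply: measurableT_comp => //; exact: measurable_inv.
Qed.

Lemma esqrtE (x : \bar R) :
  esqrt x = if x == +oo then +oo else (Num.sqrt (fine x))%:E.
Proof. by case: x => //=; rewrite sqrtr0. Qed.

Lemma measurable_esqrt : measurable_fun [set: \bar R] (@esqrt R).
Proof.
have -> : @esqrt R = fun x => if x == +oo then +oo else (Num.sqrt (fine x))%:E.
  by apply/funext => x; rewrite esqrtE.
apply: measurable_fun_ifT.
- apply: (measurable_fun_bool true) => //.
  have -> : [set: \bar R] `&` (fun x : \bar R => x == +oo) @^-1` [set true] =
     [set: \bar R] `&` [set x | id x = cst +oo x].
    by apply/seteqP; split => x /= [_ /eqP ->].
  by apply: measurable_eqe => //; exact: measurable_cst.
- exact: measurable_cst.
- apply: measurableT_comp => //; apply: measurableT_comp => //.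
  by apply: continuous_measurable_fun; exact: sqrt_continuous.
Qed.

Lemma einv_ge0 (r : R) : (0 <= r)%R -> 0 <= einv r.
Proof. by move=> r0; rewrite /einv; case: ifPn => // _; rewrite lee_fin invr_ge0. Qed.

Lemma esqrt_ge0 (x : \bar R) : 0 <= esqrt x.
Proof. by case: x => //= r; rewrite lee_fin sqrtr_ge0. Qed.

Lemma iZE (F : T -> \bar R) (c : R) : (forall x, Om x -> 0 <= F x) ->
  measurable_fun Om F -> (0 <= c)%R ->
  \int[muf]_(x in Om) (c%:E * F x) = c%:E * \int[muf]_(x in Om) F x.
Proof. by move=> F0 mF c0; exact: ge0_integralZl_EFin. Qed.

Lemma iZ (F : T -> \bar R) (c : \bar R) : (forall x, Om x -> 0 <= F x) ->
  measurable_fun Om F -> 0 <= c ->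
  \int[muf]_(x in Om) (c * F x) = c * \int[muf]_(x in Om) F x.
Proof. by move=> F0 mF c0; exact: ge0_integralZl. Qed.

Lemma iD (F G : T -> \bar R) : (forall x, Om x -> 0 <= F x) ->
  measurable_fun Om F -> (forall x, Om x -> 0 <= G x) -> measurable_fun Om G ->
  \int[muf]_(x in Om) (F x + G x) =
  \int[muf]_(x in Om) F x + \int[muf]_(x in Om) G x.
Proof. by move=> F0 mF G0 mG; exact: ge0_integralD. Qed.


Lemma yAA (X : \bar R) : 0 <= X -> +oo * X = +oo * esqrt X.
Proof.
case: X => [r||//] //= r0.
have [->|rn0] := eqVneq r 0%R; first by rewrite sqrtr0 !mule0.
have rpos : (0 < r)%R by rewrite lt_def rn0 -lee_fin.
by rewrite !gt0_mulye ?lte_fin ?sqrtr_gt0.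
Qed.

Lemma ekhAA (c : R) (X : \bar R) : (0 < c)%R -> 0 <= X ->
  einv (c * fine (esqrt X)) * X = (c^-1)%:E * esqrt X.
Proof.
move=> c0; case: X => [r||//] /= r0.
  have [->|rn0] := eqVneq r 0%R.
    by rewrite sqrtr0 mulr0 /einv eqxx !mule0.
  have rpos : (0 < r)%R by rewrite lt_def rn0 -lee_fin.
  have spos : (0 < Num.sqrt r)%R by rewrite sqrtr_gt0.
  have csn0 : (c * Num.sqrt r != 0)%R by rewrite mulf_neq0 // gt_eqF.
  rewrite /einv (negbTE csn0) -EFinM; congr EFin.
  rewrite -{2}(sqr_sqrtr (ltW rpos)); field.
  by rewrite gt_eqF // gt_eqF.
by rewrite mulr0 /einv eqxx mulyy gt0_muley // lte_fin invr_gt0.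
Qed.

Lemma lowpt (c k : R) (X : \bar R) : (0 < c)%R -> (0 <= k)%R -> 0 <= X ->
  (2 * c^-1)%:E * esqrt X <= einv k * X + (c^-1 * c^-1 * k)%:E.
Proof.
move=> c0 k0; have e0 : 0 < einv k.
  rewrite /einv; case: ifPn => // kn0.
  by rewrite lte_fin invr_gt0 lt_def kn0 k0.
case: X => [r||//] /= r0; last by rewrite (gt0_muley e0) addye // leey.
have [->|kn0] := eqVneq k 0%R.
  rewrite /einv eqxx mulr0.
  have [->|rn0] := eqVneq r 0%R; first by rewrite sqrtr0 !mule0 adde0.
  have rpos : (0 < r)%R by rewrite lt_def rn0 -lee_fin.
  by rewrite gt0_mulye ?lte_fin // addye // leey.
have kpos : (0 < k)%R by rewrite lt_def kn0 k0.
rewrite /einv (negbTE kn0) -EFinM -EFinD lee_fin.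
rewrite lee_fin in r0.
set s := Num.sqrt r; have hr : (r = s ^+ 2)%R by rewrite /s sqr_sqrtr.
rewrite hr -subr_ge0.
have -> : (k^-1 * s ^+ 2 + c^-1 * c^-1 * k - 2 * c^-1 * s =
           (s * c - k) ^+ 2 / (k * c ^+ 2))%R.
  by field; rewrite gt_eqF // gt_eqF.
by apply: divr_ge0; [exact: sqr_ge0|apply: mulr_ge0; [exact: ltW|exact: sqr_ge0]].
Qed.

Section q.
Variable q : T -> T -> R.
Hypothesis mq : measurable_fun (Om `*` Om) (fun z => q z.1 z.2).
Hypothesis aq : ae2 mu Om (fun x x' => q x x' = (- q x' x)%R).

Let mq2 : measurable_fun (Om `*` Om) (fun z => (q z.1 z.2 ^+ 2)%:E).
Proof. by apply/measurable_EFinP; exact: measurable_funX. Qed.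

Let q2_ge0 x y : 0 <= (q x y ^+ 2)%:E.
Proof. by rewrite lee_fin sqr_ge0. Qed.

Definition AA x := \int[muf]_(y in Om) (q x y ^+ 2)%:E.

Lemma AAE x : inner_sq muf Om q x = AA x.
Proof.
by apply: eq_integral => y _; rewrite real_normK // num_real.
Qed.

Lemma AA_ge0 x : 0 <= AA x.
Proof. by apply: integral_ge0 => y _. Qed.

Lemma mAA : measurable_fun Om AA.
Proof. by apply: (tonelli_meas (fun x y => (q x y ^+ 2)%:E)). Qed.

Lemma maa : measurable_fun Om (fun x => esqrt (AA x)).
Proof. exact: measurableT_comp measurable_esqrt mAA. Qed.


Let mq2s : measurable_fun (Om `*` Om) (fun z : T * T => (q z.2 z.1 ^+ 2)%:E).
Proof.
have -> : (fun z : T * T => (q z.2 z.1 ^+ 2)%:E) =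
  (fun z => (q z.1 z.2 ^+ 2)%:E) \o (fun z : T * T => (z.2, z.1)) by [].
apply: (measurable_comp mOO) => //; last first.
  by apply: measurable_funTS; exact: measurable_swap.
by move=> _ [[x y] [/= ? ?] <-]; split.
Qed.

Let msec x : Om x -> measurable_fun Om (fun y => (q x y ^+ 2)%:E).
Proof. by move=> Omx; exact: (sec_meas (fun x y => (q x y ^+ 2)%:E) x mq2 Omx). Qed.

Section formula.
Variable k : T -> R.
Hypothesis k0 : forall x, Om x -> (0 <= k x)%R.
Hypothesis mk : measurable_fun Om k.

Let e x := einv (k x).
Let me : measurable_fun Om e.
Proof. exact: measurableT_comp measurable_einv mk. Qed.
Let e0 x : Om x -> 0 <= e x.
Proof. by move=> Omx; apply: einv_ge0; exact: k0. Qed.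

Let me_snd : measurable_fun (Om `*` Om) (fun z : T * T => e z.2).
Proof.
have -> : (fun z : T * T => e z.2) = e \o snd by [].
apply: (measurable_comp mOm) => //; last exact: measurable_funTS measurable_snd.
by move=> _ [z [_ ?] <-].
Qed.

Let me_fst : measurable_fun (Om `*` Om) (fun z : T * T => e z.1).
Proof.
have -> : (fun z : T * T => e z.1) = e \o fst by [].
apply: (measurable_comp mOm) => //; last exact: measurable_funTS measurable_fst.
by move=> _ [z [? _] <-].
Qed.

Lemma swap_e : \int[muf]_(x in Om) \int[muf]_(y in Om) (e y * (q x y ^+ 2)%:E) =
  \int[muf]_(y in Om) (e y * AA y).
Proof.
rewrite (tonelli_1 (fun x y => e y * (q x y ^+ 2)%:E)); last 2 first.
- exact: emeasurable_funM me_snd mq2.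
- by move=> x y Omx Omy; apply: mule_ge0 => //; exact: e0.
transitivity (\int[muf]_(y in Om) \int[muf]_(x in Om) (e y * (q y x ^+ 2)%:E));
  last first.
  apply: eq_integral => y /set_mem Omy; rewrite ge0_integralZl //.
  - exact: msec.
  - exact: e0.
rewrite (tonelli_2 (fun x y => e y * (q y x ^+ 2)%:E)); last 2 first.
- exact: emeasurable_funM me_snd mq2s.
- by move=> x y Omx Omy; apply: mule_ge0 => //; exact: e0.
apply: ge0_ae_eq_integral => //.
- exact: emeasurable_funM me_snd mq2.
- exact: emeasurable_funM me_snd mq2s.
- by move=> [x y] [/= Omx Omy]; apply: mule_ge0 => //; exact: e0.
- by move=> [x y] [/= Omx Omy]; apply: mule_ge0 => //; exact: e0.
case: aq => N [mN [N0 sub]]; exists N; split => //.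
move=> [x y] /= /not_implyP [[/= Omx Omy] neq]; apply: sub; split => //; split => //.
by move=> /= eqq; apply: neq; rewrite eqq sqrrN.
Qed.


Lemma half_double (X : \bar R) : 0 <= X -> (2^-1)%:E * (X + X) = X.
Proof.
case: X => [r||//] r0.
  by rewrite -EFinD -EFinM; congr EFin; field.
by rewrite (_ : +oo + +oo = +oo :> \bar R) // gt0_muley // lte_fin invr_gt0.
Qed.

Lemma Ihat_formula : Ihat muf Om k q = (2^-1)%:E * \int[muf]_(x in Om) (e x * AA x).
Proof.
rewrite /Ihat; congr (_ * _).
have inner x : Om x -> \int[muf]_(y in Om) (kdd_inv k x y * (q x y ^+ 2)%:E) =
    (2^-1)%:E * (e x * AA x + \int[muf]_(y in Om) (e y * (q x y ^+ 2)%:E)).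
  move=> Omx.
  transitivity (\int[muf]_(y in Om)
      ((2^-1)%:E * (e x * (q x y ^+ 2)%:E + e y * (q x y ^+ 2)%:E))).
    apply: eq_integral => y /set_mem Omy; rewrite /kdd_inv -muleA ge0_muleDl //; exact: e0.
  rewrite (iZE ( fun y => e x * (q x y ^+ 2)%:E + e y * (q x y ^+ 2)%:E)); last 3 first.
  - by move=> y Omy; apply: adde_ge0; apply: mule_ge0 => //; exact: e0.
  - by apply: emeasurable_funD; [exact: measurable_funeM (msec _ Omx)|
      exact: emeasurable_funM me (msec _ Omx)].
  - by rewrite invr_ge0.
  congr (_ * _).
  rewrite (iD ( fun y => e x * (q x y ^+ 2)%:E) ( fun y => e y * (q x y ^+ 2)%:E)); last 4 first.
  - by move=> y Omy; apply: mule_ge0 => //; exact: e0.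
  - exact: measurable_funeM (msec _ Omx).
  - by move=> y Omy; apply: mule_ge0 => //; exact: e0.
  - exact: emeasurable_funM me (msec _ Omx).
  congr (_ + _).
  rewrite (iZ ( fun y => (q x y ^+ 2)%:E)) //; [exact: msec|exact: e0].
transitivity (\int[muf]_(x in Om)
   ((2^-1)%:E * (e x * AA x + \int[muf]_(y in Om) (e y * (q x y ^+ 2)%:E)))).
  by apply: eq_integral => x /set_mem Omx; rewrite inner.
have mH : measurable_fun Om (fun x => \int[muf]_(y in Om) (e y * (q x y ^+ 2)%:E)).
  apply: (tonelli_meas (fun x y => e y * (q x y ^+ 2)%:E)).
  - exact: emeasurable_funM me_snd mq2.
  - by move=> x y Omx Omy; apply: mule_ge0 => //; exact: e0.
have H0 x : Om x -> 0 <= \int[muf]_(y in Om) (e y * (q x y ^+ 2)%:E).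
  by move=> Omx; apply: integral_ge0 => y Omy; apply: mule_ge0 => //; exact: e0.
have eA0 x : Om x -> 0 <= e x * AA x.
  by move=> Omx; apply: mule_ge0; [exact: e0|exact: AA_ge0].
have meA : measurable_fun Om (fun x => e x * AA x).
  exact: emeasurable_funM me mAA.
rewrite (iZE ( fun x => e x * AA x + \int[muf]_(y in Om) (e y * (q x y ^+ 2)%:E))); last 3 first.
- by move=> x Omx; apply: adde_ge0; [exact: eA0|exact: H0].
- exact: emeasurable_funD.
- by rewrite invr_ge0.
rewrite (iD ( fun x => e x * AA x) ( fun x => \int[muf]_(y in Om) (e y * (q x y ^+ 2)%:E))) // swap_e half_double //.
by apply: integral_ge0.
Qed.

End formula.

Lemma comp_fst (f : T -> \bar R) : measurable_fun Om f ->
  measurable_fun (Om `*` Om) (fun z : T * T => f z.1).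
Proof.
move=> mf; have -> : (fun z : T * T => f z.1) = f \o fst by [].
apply: (measurable_comp mOm) => //; last exact: measurable_funTS measurable_fst.
by move=> _ [z [? _] <-].
Qed.

Lemma comp_snd (f : T -> \bar R) : measurable_fun Om f ->
  measurable_fun (Om `*` Om) (fun z : T * T => f z.2).
Proof.
move=> mf; have -> : (fun z : T * T => f z.2) = f \o snd by [].
apply: (measurable_comp mOm) => //; last exact: measurable_funTS measurable_snd.
by move=> _ [z [_ ?] <-].
Qed.

Lemma mkdd (k : T -> R) : measurable_fun Om k ->
  measurable_fun (Om `*` Om)
    (fun z : T * T => kdd_inv k z.1 z.2 * (q z.1 z.2 ^+ 2)%:E).
Proof.
move=> mk; have me : measurable_fun Om (fun x => einv (k x)).
  exact: measurableT_comp measurable_einv mk.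
apply: emeasurable_funM => //; rewrite /kdd_inv; apply: measurable_funeM.
apply: (emeasurable_funD (f := fun z : T * T => einv (k z.1))
  (g := fun z : T * T => einv (k z.2))).
- exact: (comp_fst (fun x => einv (k x))).
- exact: (comp_snd (fun x => einv (k x))).
Qed.

Lemma Ihat_ae (k k' : T -> R) : measurable_fun Om k -> measurable_fun Om k' ->
  {ae muf, forall x, Om x -> k x = k' x} -> Ihat muf Om k q = Ihat muf Om k' q.
Proof.
move=> mk mk' [N [mN N0 sub]].
have kN x : ~ N x -> Om x -> k x = k' x.
  by move=> Nx; apply: contrapT => h; apply: Nx; exact: sub.
rewrite /Ihat; apply: (congr1 (fun X => (2^-1)%:E * X)).
have eqI x : ~ N x -> Om x ->
   \int[muf]_(y in Om) (kdd_inv k x y * (q x y ^+ 2)%:E) =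
   \int[muf]_(y in Om) (kdd_inv k' x y * (q x y ^+ 2)%:E).
  move=> Nx Omx; apply: ae_eq_integral => //.
  - exact: (sec_meas (fun x y => kdd_inv k x y * (q x y ^+ 2)%:E) x (mkdd _ mk) Omx).
  - exact: (sec_meas (fun x y => kdd_inv k' x y * (q x y ^+ 2)%:E) x (mkdd _ mk') Omx).
  exists N; split => // y /= /not_implyP [Omy neq]; apply: contrapT => Ny.
  by apply: neq; rewrite /kdd_inv (kN x) // (kN y).
apply: ae_eq_integral => //.
- exact: (gen_meas (fun x y => kdd_inv k x y * (q x y ^+ 2)%:E) (mkdd _ mk)).
- exact: (gen_meas (fun x y => kdd_inv k' x y * (q x y ^+ 2)%:E) (mkdd _ mk')).
exists N; split => // x /= /not_implyP [Omx neq]; apply: contrapT => Nx.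
by apply: neq; exact: eqI.
Qed.

Lemma LE : L12norm muf Om q = \int[muf]_(x in Om) esqrt (AA x).
Proof. by apply: eq_integral => x _; rewrite /= AAE. Qed.

Lemma khE : kappa_hat muf Om q =
  (fun x => c_hat muf Om q * fine (esqrt (AA x)))%R.
Proof. by apply/funext => x; rewrite /kappa_hat AAE. Qed.

Section main.
Variables (L M : \bar R) (c : R).
Hypothesis LE' : \int[muf]_(x in Om) esqrt (AA x) = L.
Hypothesis ME : muf Om = M.
Hypothesis cE : c = (fine M / fine L)%R.
Hypothesis finOm : M < +oo.
Hypothesis finL : L < +oo.

Let L0 : 0 <= L.
Proof. by rewrite -LE'; apply: integral_ge0 => x _; exact: esqrt_ge0. Qed.
Let M0 : 0 <= M.
Proof. by rewrite -ME; exact: measure_ge0. Qed.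
Let Lfin : L \is a fin_num.
Proof. by rewrite (ge0_fin_numE L0); exact: finL. Qed.
Let Mfin : M \is a fin_num.
Proof. by rewrite (ge0_fin_numE M0); exact: finOm. Qed.
Let c0 : (0 <= c)%R.
Proof.
rewrite cE; apply: divr_ge0; apply: fine_ge0; [exact: M0|exact: L0].
Qed.
Let kh x := (c * fine (esqrt (AA x)))%R.
Let kh0 x : (0 <= kh x)%R.
Proof. by apply: mulr_ge0; [exact: c0|apply: fine_ge0; exact: esqrt_ge0]. Qed.
Let mkh : measurable_fun Om kh.
Proof.
apply: measurable_funM; first exact: measurable_cst.
by apply: measurableT_comp; [exact: fine_measurable|exact: maa].
Qed.
Let kh_le x : Om x -> (kh x)%:E <= c%:E * esqrt (AA x).
Proof.
move=> Omx; rewrite EFinM; apply: lee_wpmul2l; first by rewrite lee_fin; exact: c0.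
by have := esqrt_ge0 (AA x); case: (esqrt (AA x)) => [r||] //= _; rewrite leey.
Qed.
Let int_kh : \int[muf]_(x in Om) (kh x)%:E <= c%:E * L.
Proof.
have h : \int[muf]_(x in Om) (c%:E * esqrt (AA x)) = c%:E * L.
  rewrite -LE'; apply: iZE; [by move=> x _; exact: esqrt_ge0|exact: maa|exact: c0].
rewrite -h; apply: ge0_le_integral.
- exact: mOm.
- by move=> x _; rewrite lee_fin; exact: kh0.
- exact/measurable_EFinP.
- by apply: measurable_funeM; exact: maa.
- exact: kh_le.
Qed.

Lemma adm_kh : admissible0 muf Om kh.
Proof.
split; [|split].
- apply/integrableP; split; first exact/measurable_EFinP.
  rewrite (eq_integral (fun x => (kh x)%:E)); last first.
    by move=> x _; rewrite gee0_abs // lee_fin; exact: kh0.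
  apply: le_lt_trans int_kh _.
  apply: lte_mul_pinfty; [by rewrite lee_fin; exact: c0|by []|exact: finL].
- by apply: aeW => x _; exact: kh0.
- apply: le_trans int_kh _; rewrite -[X in _ <= X]/(muf Om) ME.
  have [hL|hL] := eqVneq (fine L) 0%R.
    by rewrite cE hL invr0 mulr0 mul0e; exact: M0.
  by rewrite cE -[X in _ * X](fineK Lfin) -EFinM divfK // fineK.
Qed.

Lemma main_kh k0 : admissible0 muf Om k0 ->
  Ihat muf Om kh q <= Ihat muf Om k0 q.
Proof.
move=> [ik0 [aek0 intk0]].
have mk0 : measurable_fun Om k0.
  by move/integrableP: ik0 => [/measurable_EFinP].
pose k' := (k0 \max cst 0%R)%R.
have k'0 x : (0 <= k' x)%R by rewrite /k' /= le_max lexx orbT.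
have mk' : measurable_fun Om k'.
  by apply: measurable_maxr; [exact: mk0|exact: measurable_cst].
have ae : {ae muf, forall x, Om x -> k0 x = k' x}.
  apply: filterS aek0 => x H Omx; rewrite /k' /= max_l //; exact: H.
rewrite (Ihat_ae k0 k' mk0 mk' ae).
rewrite (Ihat_formula kh); [|by move=> x _; exact: kh0|exact: mkh].
rewrite (Ihat_formula k'); [|by move=> x _; exact: k'0|exact: mk'].
apply: lee_wpmul2l; first by rewrite lee_fin invr_ge0.
have [hL|hL] := eqVneq (fine L) 0%R.
  have L00 : L = 0 by rewrite -(fineK Lfin) hL.
  have -> : \int[muf]_(x in Om) (einv (kh x) * AA x) = 0.
    transitivity (\int[muf]_(x in Om) (+oo * esqrt (AA x))).
      apply: eq_integral => x _.
      rewrite /kh cE hL invr0 mulr0 mul0r /einv eqxx; apply: yAA; exact: AA_ge0.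
    rewrite iZ; [by rewrite LE' L00 mule0|by move=> x _; exact: esqrt_ge0|
      exact: maa|by []].
  apply: integral_ge0 => x Omx; apply: mule_ge0; [exact: einv_ge0|exact: AA_ge0].
have Mpos : (0 < fine M)%R.
  rewrite lt_def (fine_ge0 M0) andbT; apply/eqP => hM.
  have M00 : muf Om = 0 by rewrite ME -(fineK Mfin) hM.
  move/eqP: hL; apply; rewrite -LE'.
  rewrite (@ge0_negligible_integral _ _ _ muf Om Om (fun x => esqrt (AA x))
     mOm mOm maa _ M00); first by rewrite setDv integral_set0.
  by move=> x _; exact: esqrt_ge0.
have Lpos : (0 < fine L)%R by rewrite lt_def hL (fine_ge0 L0).
have cpos : (0 < c)%R by rewrite cE divr_gt0.
have -> : \int[muf]_(x in Om) (einv (kh x) * AA x) = (c^-1)%:E * L.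
  transitivity (\int[muf]_(x in Om) ((c^-1)%:E * esqrt (AA x))).
    by apply: eq_integral => x _; rewrite /kh; apply: ekhAA => //; exact: AA_ge0.
  rewrite -LE'; apply: iZE; [by move=> x _; exact: esqrt_ge0|exact: maa|].
  by rewrite invr_ge0; exact: c0.
have me' : measurable_fun Om (fun x => einv (k' x) * AA x).
  apply: emeasurable_funM; last exact: mAA.
  exact: measurableT_comp measurable_einv mk'.
have e'0 x : Om x -> 0 <= einv (k' x) * AA x.
  by move=> Omx; apply: mule_ge0; [exact: einv_ge0|exact: AA_ge0].
have ci0 : (0 <= c^-1)%R by rewrite invr_ge0; exact: c0.
have low : (2 * c^-1)%:E * L <= \int[muf]_(x in Om) (einv (k' x) * AA x) +
    (c^-1 * c^-1)%:E * \int[muf]_(x in Om) (k' x)%:E.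
  rewrite -LE' -iZE; last 3 first.
  - by move=> x _; exact: esqrt_ge0.
  - exact: maa.
  - by rewrite mulr_ge0.
  rewrite -iZE; last 3 first.
  - by move=> x _; rewrite lee_fin.
  - exact/measurable_EFinP.
  - by rewrite mulr_ge0.
  rewrite -iD; last 4 first.
  - exact: e'0.
  - exact: me'.
  - by move=> x _; rewrite lee_fin mulr_ge0 // mulr_ge0.
  - by apply: measurable_funeM; exact/measurable_EFinP.
  apply: ge0_le_integral.
  - exact: mOm.
  - by move=> x _; rewrite mule_ge0 ?esqrt_ge0 // lee_fin mulr_ge0.
  - by apply: measurable_funeM; exact: maa.
  - apply: emeasurable_funD; first exact: me'.
    by apply: measurable_funeM; exact/measurable_EFinP.
  move=> x Omx; rewrite -EFinM.
  by apply: lowpt => //; exact: AA_ge0.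
have K : \int[muf]_(x in Om) (k' x)%:E = \int[muf]_(x in Om) (k0 x)%:E.
  apply: ae_eq_integral.
  - exact: mOm.
  - exact/measurable_EFinP.
  - exact/measurable_EFinP.
  by apply: filterS ae => x H Omx; rewrite H.
rewrite K in low.
have intk0' : \int[muf]_(x in Om) (k0 x)%:E <= M.
  by rewrite -ME; exact: intk0.
move: low intk0'.
set X := \int[muf]_(x in Om) (einv (k' x) * AA x).
set KK := \int[muf]_(x in Om) (k0 x)%:E.
move=> low intk0'.
have KK0 : 0 <= KK.
  by rewrite /KK -K; apply: integral_ge0 => x _; rewrite lee_fin.
have KKfin : KK \is a fin_num.
  by rewrite (ge0_fin_numE KK0) (le_lt_trans intk0' finOm).
have X0 : 0 <= X by apply: integral_ge0.
have KKM : (fine KK <= fine M)%R by apply: fine_le.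
move: low; rewrite -(fineK Lfin) -(fineK KKfin) -!EFinM.
case: X X0 => [x| |] X0; [|by move=> _; rewrite leey|by move: X0; rewrite leeNy_eq => /eqP].
rewrite -EFinD !lee_fin => low.
move: low KKM; rewrite cE.
set l := fine L; set m := fine M; set kk := fine KK => low KKM.
rewrite invf_div in low *.
have hu : (l / m * m = l)%R by rewrite divfK // gt_eqF.
have u0 : (0 < l / m)%R by rewrite divr_gt0.
move: low hu u0; set u := (l / m)%R => low hu u0.
nra.
Qed.
End main. End q. End core.

Theorem proposition2p10 (d : measure_display) (T : measurableType d) (R : realType)
  (mu : {measure set T -> \bar R}) (Om : set T)
  (hsf : sigma_finite setT mu) (mOm : measurable Om) (finOm : (mu Om < +oo)%E)
  (q : T -> T -> R) (hq : in_L12a mu Om q) (hq0 : ~ ae_zero2 mu Om q) :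
  admissible0 mu Om (kappa_hat mu Om q) /\
  forall k0 : T -> R, admissible0 mu Om k0 ->
    (Ihat mu Om (kappa_hat mu Om q) q <= Ihat mu Om k0 q)%E.
Proof.
case: hq => [[mq finL] aq].
pose L := L12norm (muf d T R mu) Om q.
pose M := muf d T R mu Om.
pose c := c_hat (muf d T R mu) Om q.
have LE' := esym (LE d T R mu Om q).
have A := adm_kh _ _ _ _ _ hsf mOm _ mq L M c LE' (erefl M) (erefl c) finOm finL.
have B := main_kh _ _ _ _ _ hsf mOm _ mq aq L M c LE' (erefl M) (erefl c) finOm finL.
change (admissible0 (muf d T R mu) Om (kappa_hat (muf d T R mu) Om q) /\
  forall k0 : T -> R, admissible0 (muf d T R mu) Om k0 ->
    (Ihat (muf d T R mu) Om (kappa_hat (muf d T R mu) Om q) q <=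
     Ihat (muf d T R mu) Om k0 q)%E).
rewrite khE; split; first exact: A.
by move=> k0 hk0; exact: B.
Qed.
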